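(* Let $\Omega\subseteq\mathbb{R}^n$. If $\varphi\in\Phi_{\mathrm w}(\Omega)$ satisfies condition (A2), then so does its conjugate $\varphi^*$.
   Context: A function $f:[0,\infty)\to[0,\infty]$ is $a$-almost increasing ($a\ge1$) if $f(s)\le a f(t)$ for all $s\le t$. A function $\varphi:\Omega\times[0,\infty)\to[0,\infty]$ is a weak $\Phi$-function, $\varphi\in\Phi_{\mathrm w}(\Omega)$, if for a.e. $x\in\Omega$: $x\mapsto\varphi(x,|f(x)|)$ is measurable for every measurable $f:\Omega\to\mathbb{R}$; $t\mapsto\varphi(x,t)$ is increasing (non-decreasing); $\varphi(x,0)=\lim_{t\to0^+}\varphi(x,t)=0$ and $\lim_{t\to\infty}\varphi(x,t)=\infty$; and $t\mapsto\varphi(x,t)/t$ is $a$-almost increasing on $(0,\infty)$ with $a\ge1$ independent of $x$. The conjugate is $\varphi^*(x,t):=\sup\{st-\varphi(x,s):s\ge0\}$. For any $\psi:\Omega\times[0,\infty)\to[0,\infty]$ the left-inverse is $\psi^{-1}(x,\tau):=\inf\{t\ge0:\psi(x,t)\ge\tau\}$. Condition (A2) for $\psi$: for every $\sigma>0$ there exist $\beta\in(0,1]$ and $h\in L^1(\Omega)\cap L^\infty(\Omega)$, $h\ge0$, such that for a.e. $x,y\in\Omega$, $\beta\psi^{-1}(x,\tau)\le\psi^{-1}(y,\tau+h(x)+h(y))$ for all $\tau\in[0,\sigma]$. *)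

(* Defs.v *)
From HB Require Import structures.
From mathcomp Require Import all_boot all_order all_algebra.
From mathcomp Require Import all_classical all_reals all_analysis.
From mathcomp Require Import measurable_realfun lebesgue_integral.
Set Implicit Arguments. Unset Strict Implicit. Unset Printing Implicit Defensive.
Import Order.TTheory GRing.Theory Num.Theory.
Import numFieldNormedType.Exports.
Local Open Scope classical_set_scope.
Local Open Scope ring_scope.
Local Open Scope ereal_scope.

Section PhiDefs.
Context {R : realType} {d : measure_display} {T : measurableType d}.

Definition almost_increasing (a : R) (A : set R) (f : R -> \bar R) : Prop :=
  forall s t, A s -> A t -> (s <= t)%R -> f s <= a%:E * f t.

Definition weak_Phi (mu : {measure set T -> \bar R}) (Omega : set T)
    (phi : T -> R -> \bar R) : Prop :=
  (forall f : T -> R, measurable_fun Omega f ->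
     measurable_fun Omega ((fun x => phi x `|f x|%R) : T -> \bar R)) /\
  exists a : R, (1 <= a)%R /\
  {ae mu, forall x, Omega x ->
     (forall t, (0 <= t)%R -> 0 <= phi x t) /\
     (forall s t, (0 <= s)%R -> (s <= t)%R -> phi x s <= phi x t) /\
     phi x 0%R = 0 /\
     phi x t @[t --> 0%R^'+] --> 0 /\
     phi x t @[t --> +oo%R] --> +oo /\
     almost_increasing a `]0%R, +oo[ (fun t => phi x t * (t^-1)%:E)}.

Definition conjugate (phi : T -> R -> \bar R) : T -> R -> \bar R :=
  fun x t => ereal_sup [set (s * t)%:E - phi x s | s in `[0%R, +oo[].

Definition left_inverse (psi : T -> R -> \bar R) (x : T) (tau : R) : \bar R :=
  ereal_inf [set t%:E | t in [set t | (0 <= t)%R /\ tau%:E <= psi x t]].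

Definition L1_Linf_nonneg (mu : {measure set T -> \bar R}) (Omega : set T)
    (h : T -> R) : Prop :=
  (forall x, Omega x -> (0 <= h x)%R) /\
  measurable_fun Omega h /\
  mu.-integrable Omega (EFin \o h) /\
  exists M : R, {ae mu, forall x, Omega x -> (`|h x| <= M)%R}.

Definition A2 (mu : {measure set T -> \bar R}) (Omega : set T)
    (psi : T -> R -> \bar R) : Prop :=
  forall sigma : R, (0 < sigma)%R ->
  exists beta : R, (0 < beta)%R /\ (beta <= 1)%R /\
  exists h : T -> R, L1_Linf_nonneg mu Omega h /\
  exists N : set T, mu.-negligible N /\
  forall x y, Omega x -> Omega y -> ~ N x -> ~ N y ->
  forall tau : R, (0 <= tau)%R -> (tau <= sigma)%R ->
    beta%:E * left_inverse psi x tau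
      <= left_inverse psi y (tau + h x + h y)%R.

End PhiDefs.

(* Main.v *)
Require Import Defs.
From HB Require Import structures.
From mathcomp Require Import all_boot all_order all_algebra.
From mathcomp Require Import all_classical all_reals all_analysis.
From mathcomp Require Import measurable_realfun lebesgue_integral.
From mathcomp Require Import ring lra.
Import Order.TTheory GRing.Theory Num.Theory.
Local Open Scope classical_set_scope.
Local Open Scope ring_scope.


Section Aux.
Variable R : realType.
Local Open Scope ereal_scope.

Definition LI (f : R -> \bar R) (tau : R) : \bar R :=
  ereal_inf [set t%:E | t in [set t | (0 <= t)%R /\ tau%:E <= f t]].
Definition CJ (f : R -> \bar R) (t : R) : \bar R :=
  ereal_sup [set (s * t)%:E - f s | s in `[0%R, +oo[].

Definition good (a : R) (f : R -> \bar R) : Prop :=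
     (forall t, (0 <= t)%R -> 0 <= f t) /\
     (forall s t, (0 <= s)%R -> (s <= t)%R -> f s <= f t) /\
     f 0%R = 0 /\
     f t @[t --> 0%R^'+] --> 0 /\
     f t @[t --> +oo%R] --> +oo /\
     almost_increasing a `]0%R, +oo[ (fun t => f t * (t^-1)%:E).

Lemma LI_ge0 f tau : 0 <= LI f tau.
Proof. by apply/ereal_infP => _ [t [t0 _] <-]; rewrite lee_fin. Qed.

Lemma LI_le {f tau t} : (0 <= t)%R -> tau%:E <= f t -> LI f tau <= t%:E.
Proof. by move=> t0 ft; apply: ereal_inf_lbound; exists t. Qed.

Lemma LI_mono {f tau1 tau2} : (tau1 <= tau2)%R -> LI f tau1 <= LI f tau2.
Proof.
move=> le12; apply: ereal_inf_le_tmp => _ [t [t0 h] <-]; exists t => //.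
by split => //; apply: le_trans h; rewrite lee_fin.
Qed.

Variables (a : R) (f : R -> \bar R).
Hypothesis a1 : (1 <= a)%R.
Hypothesis Hg : good a f.

Lemma f_ge0 {t} : (0 <= t)%R -> 0 <= f t.
Proof. by case: Hg => H _; apply: H. Qed.
Lemma f_mono {s t} : (0 <= s)%R -> (s <= t)%R -> f s <= f t.
Proof. by case: Hg => _ [H _]; apply: H. Qed.
Lemma f0 : f 0%R = 0.
Proof. by case: Hg => _ [_ [H _]]. Qed.
Lemma f_cvg0 : f t @[t --> 0%R^'+] --> 0.
Proof. by case: Hg => _ [_ [_ [H _]]]. Qed.
Lemma f_cvgy : f t @[t --> +oo%R] --> +oo.
Proof. by case: Hg => _ [_ [_ [_ [H _]]]]. Qed.
Lemma f_ai : almost_increasing a `]0%R, +oo[ (fun t => f t * (t^-1)%:E).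
Proof. by case: Hg => _ [_ [_ [_ [_ H]]]]. Qed.

Lemma LI_above {tau u t} : LI f tau = u%:E -> (u < t)%R -> tau%:E <= f t.
Proof.
move=> Hu ut.
have : LI f tau < t%:E by rewrite Hu lte_fin.
case/ereal_inf_lt => _ [t'' [t0 h] <-]; rewrite lte_fin => lt.
exact: le_trans h (f_mono t0 (ltW lt)).
Qed.

Lemma LI_real tau : (0 < tau)%R -> exists2 u, (0 < u)%R & LI f tau = u%:E.
Proof.
move=> tau0.
have : \forall t \near +oo%R, (0 <= t)%R /\ tau%:E <= f t.
  apply: filterI; first exact: nbhs_pinfty_ge.
  exact: cvgey_ge f_cvgy tau.
case/filter_ex => t0 [t00 ft0].
set L := LI f tau.
have L0 : 0 <= L := LI_ge0 f tau.
have Lt : L <= t0%:E := LI_le t00 ft0.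
have Lfin : L \is a fin_num by rewrite ge0_fin_numE // (le_lt_trans Lt) // ltry.
have LE : L = (fine L)%:E by rewrite fineK.
exists (fine L) => //.
rewrite lt_neqAle fine_ge0 // andbT; apply/negP => /eqP u0.
have above : forall t, (0 < t)%R -> tau%:E <= f t.
  by move=> t tp; apply: (LI_above LE); rewrite -u0.
have [/= fin cv] := (fine_cvgP _ _).1 f_cvg0.
have cv2 := (cvgrPdist_lt _ _).1 cv _ tau0.
have {}cv2 := cv2 (at_right_proper_filter 0%R).
have H := filterI (nbhs_right_gt 0%R) (filterI fin cv2).
have {}H := H (at_right_proper_filter 0%R) (at_right_proper_filter 0%R).
move: H; case/filter_ex => t [tp [ft /= dt]].
have := above t tp.
rewrite -(fineK ft) lee_fin => le.
move: dt; rewrite sub0r normrN => dt.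
have := le_lt_trans le (le_lt_trans (ler_norm _) dt).
by rewrite ltxx.
Qed.

Lemma a0 : (0 < a)%R.
Proof. exact: lt_le_trans ltr01 a1. Qed.

Lemma LI_G tau u t' t c : LI f tau = u%:E -> (u < t')%R -> (t' <= t)%R ->
  (c * (a * t') <= t * tau)%R -> c%:E <= f t.
Proof.
move=> Hu ut' t't hc.
have u0 : (0 <= u)%R by rewrite -lee_fin -Hu LI_ge0.
have t'0 : (0 < t')%R by exact: le_lt_trans u0 ut'.
have t0 : (0 < t)%R by exact: lt_le_trans t'0 t't.
have ft' := LI_above Hu ut'.
have ai := f_ai t' t.
have ai2 : f t' * (t'^-1)%:E <= a%:E * (f t * (t^-1)%:E).
  by apply: ai => //=; rewrite in_itv /= andbT.
have aa := a0.
case Eft: (f t) => [r| |].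
- have : (tau / t')%:E <= f t' * (t'^-1)%:E.
    by rewrite EFinM; apply: lee_wpmul2r => //; rewrite lee_fin invr_ge0 ltW.
  move/le_trans/(_ ai2); rewrite Eft -!EFinM lee_fin => H.
  have H2 : (t * tau / (a * t') <= r)%R.
    have -> : (t * tau / (a * t') = (tau / t') * (t / a))%R.
      by field; rewrite ?gt_eqF.
    have -> : (r = a * (r * t^-1) * (t / a))%R by field; rewrite ?gt_eqF.
    by apply: ler_wpM2r => //; rewrite divr_ge0 // ltW.
  apply: le_trans H2; rewrite ler_pdivlMr //; exact: mulr_gt0.
- by rewrite leey.
- by have := f_ge0 (ltW t0); rewrite Eft.
Qed.

Lemma LI_scale tau tau' u u' : (0 < tau)%R -> (tau <= tau')%R ->
  LI f tau = u%:E -> LI f tau' = u'%:E -> (tau * u' <= a * tau' * u)%R.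
Proof.
move=> tau0 tt Hu Hu'.
have tau'0 : (0 < tau')%R by exact: lt_le_trans tau0 tt.
have u0 : (0 <= u)%R by rewrite -lee_fin -Hu LI_ge0.
have aa := a0.
set c := (a * tau' * u / tau)%R.
have c0 : (0 <= c)%R by rewrite /c divr_ge0 ?mulr_ge0 // ltW.
have ctau : (c * tau = a * tau' * u)%R by rewrite /c; field; rewrite gt_eqF.
suff : (u' <= c)%R.
  by rewrite -ctau mulrC; move/ler_wpM2r; apply; exact: ltW.
apply/ler_addgt0Pr => e e0.
set t := (c + e)%R.
have t0 : (0 < t)%R by rewrite /t; by apply: lt_le_trans e0 _; rewrite /t lerDr.
have ct : (c < t)%R by rewrite /t ltrDl.
suff : u'%:E <= t%:E by rewrite lee_fin.
rewrite -Hu'; apply: (LI_le (ltW t0)).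
apply: (LI_G _ _ ((t * tau / (a * tau'))%R) _ _ Hu).
- rewrite ltr_pdivlMr ?mulr_gt0 //.
  have -> : (u * (a * tau') = c * tau)%R by rewrite ctau; ring.
  by rewrite ltr_pM2r.
- rewrite ler_pdivrMr ?mulr_gt0 //; apply: ler_wpM2l; first exact: ltW.
  apply: le_trans tt _; rewrite ler_peMl //; exact: ltW.
- rewrite le_eqVlt; apply/orP; left; apply/eqP; field.
  by rewrite gt_eqF // gt_eqF.
Qed.

Lemma V_low tau u : (0 < tau)%R -> (0 < u)%R -> LI f tau = u%:E ->
  (tau / (a * u))%:E <= LI (CJ f) tau.
Proof.
move=> tau0 u0 Hu.
have aa := a0.
apply/ereal_infP => _ [s [s0 hs] <-]; rewrite lee_fin leNgt; apply/negP => slt.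
have au0 : (0 < a * u)%R by exact: mulr_gt0.
move: (slt); rewrite ltr_pdivlMr // => sua.
have su0 : (0 <= s * u)%R by rewrite mulr_ge0 // ltW.
have su : (s * u < tau)%R.
  apply: le_lt_trans sua.
  have -> : (s * (a * u) = s * u * a)%R by ring.
  by rewrite ler_peMr.
have : CJ f s <= (s * u)%:E.
  apply/ereal_supP => _ [t t0 <-].
  move: t0; rewrite /= in_itv /= andbT => t0.
  case: (leP t u) => htu.
  + have := f_ge0 t0; case Eft : (f t) => [r| |] //= r0; last by rewrite addeNy leNye.
    rewrite -EFinB lee_fin; rewrite lee_fin in r0.
    have : (s * t <= s * u)%R by apply: ler_wpM2l.
    lra.
  + move: s0; rewrite le_eqVlt => /predU1P [s_eq0 | s_pos].
    * have := f_ge0 t0; rewrite -s_eq0 mulr0; case Eft : (f t) => [r| |] //= r0; last by rewrite addeNy leNye.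
      rewrite -EFinB lee_fin; rewrite lee_fin in r0; lra.
    * set m := Num.min t (tau / (a * s))%R.
      have fge : (t * s)%:E <= f t.
        apply: (LI_G _ _ m _ _ Hu).
        - rewrite lt_min htu /= ltr_pdivlMr ?mulr_gt0 //.
          by have -> : (u * (a * s) = s * (a * u))%R by ring.
        - by rewrite ge_min lexx.
        - have m1 : (m <= tau / (a * s))%R by rewrite ge_min lexx orbT.
          have m2 : (a * s * m <= tau)%R.
            by rewrite mulrC -ler_pdivlMr // mulr_gt0.
          have -> : (t * s * (a * m) = t * (a * s * m))%R by ring.
          apply: ler_wpM2l => //; apply: ltW; exact: le_lt_trans (ltW u0) htu.
      apply: le_trans (_ : 0 <= _); first by rewrite sube_le0.
      by rewrite lee_fin.
move=> H; have := le_trans hs H; rewrite lee_fin => H'.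
by have := lt_le_trans su H'; rewrite ltxx.
Qed.

Lemma V_up tau u : (0 < tau)%R -> (0 < u)%R -> LI f tau = u%:E ->
  LI (CJ f) tau <= (2 * tau / u)%:E.
Proof.
move=> tau0 u0 Hu.
apply/lee_addgt0Pr => e e0; rewrite -EFinD.
set s := (2 * tau / u + e)%R.
have s1 : (2 * tau / u < s)%R by rewrite /s ltrDl.
have s0 : (0 < s)%R by apply: le_lt_trans s1; rewrite divr_ge0 ?mulr_ge0 // ltW.
apply: (LI_le (ltW s0)).
set t := (2 * tau / s)%R.
have t0 : (0 <= t)%R by rewrite /t divr_ge0 ?mulr_ge0 // ltW.
have tu : (t < u)%R.
  by rewrite /t ltr_pdivrMr // [(u * s)%R]mulrC -ltr_pdivrMr.
have ftlt : f t < tau%:E.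
  rewrite ltNge; apply/negP => H; have := LI_le t0 H.
  by rewrite Hu lee_fin leNgt tu.
have St : [set (s' * s)%:E - f s' | s' in `[0%R, +oo[] ((t * s)%:E - f t).
  by exists t => //; rewrite /= in_itv /= andbT.
apply: le_trans (ereal_sup_ubound St).
have ts : (t * s = 2 * tau)%R by rewrite /t; field; rewrite gt_eqF.
rewrite ts.
have := f_ge0 t0; move: ftlt; case Eft : (f t) => [r| |] //=.
rewrite -EFinD !lte_fin !lee_fin => r1 r0; lra.
Qed.

Lemma V_zero : LI (CJ f) 0 <= 0.
Proof.
apply: (LI_le (lexx 0%R)).
have S0 : [set (s' * 0)%:E - f s' | s' in `[0%R, +oo[] ((0 * 0)%:E - f 0%R).
  by exists 0%R => //; rewrite /= in_itv /= andbT.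
apply: le_trans (ereal_sup_ubound S0).
by rewrite f0 mulr0 sube0.
Qed.

End Aux.

Local Open Scope classical_set_scope.
Local Open Scope ring_scope.

Theorem lemma2p4 (R : realType) (d : measure_display) (T : measurableType d)
  (mu : {measure set T -> \bar R}) (Omega : set T) (phi : T -> R -> \bar R) :
  measurable Omega ->
  weak_Phi mu Omega phi -> A2 mu Omega phi -> A2 mu Omega (conjugate phi).
Proof.
move=> mO [_ [a [a1 aeP]]] A2phi sigma sigma0.
have [beta [b0 [b1 [h [hL [N [Nneg HN]]]]]]] := A2phi 1%R ltr01.
have hL' := hL; case: hL => [h0 [_ [_ [M hM]]]].
set M' := Num.max M 0%R.
have M'0 : (0 <= M')%R by rewrite le_max lexx orbT.
set L := (1 + sigma + 2 * M')%R.
have L1 : (1 <= L)%R by rewrite /L; lra.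
have a0 : (0 < a)%R by exact: lt_le_trans ltr01 a1.
have L0 : (0 < L)%R by exact: lt_le_trans ltr01 L1.
set D := (a * L * (4 * (a * a)))%R.
have D1 : (1 <= D)%R.
  rewrite /D; apply: mulr_ege1; first exact: mulr_ege1.
  apply: mulr_ege1; first lra. exact: mulr_ege1.
have D0 : (0 < D)%R by exact: lt_le_trans ltr01 D1.
set beta' := (beta / D)%R.
exists beta'; split; first by rewrite divr_gt0.
split; first by rewrite ler_pdivrMr // mul1r; exact: le_trans b1 D1.
exists h; split => //.
set E1 := ~` [set x | Omega x -> good R a (phi x)].
set E2 := ~` [set x | Omega x -> (`|h x| <= M)%R].
exists (N `|` E1 `|` E2); split.
  apply: negligibleU; last exact: hM.
  by apply: negligibleU => //; exact: aeP.
move=> x y Ox Oy Nx Ny.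
have nNx : ~ N x by move=> H; apply: Nx; left; left.
have nNy : ~ N y by move=> H; apply: Ny; left; left.
have gx : good R a (phi x).
  case: (pselect (Omega x -> good R a (phi x))) => [H|H]; first exact: H.
  by exfalso; apply: Nx; left; right.
have gy : good R a (phi y).
  case: (pselect (Omega y -> good R a (phi y))) => [H|H]; first exact: H.
  by exfalso; apply: Ny; left; right.
have hxM : (h x <= M')%R.
  case: (pselect (Omega x -> (`|h x| <= M)%R)) => [H|H]; last first.
    by exfalso; apply: Nx; right.
  by rewrite le_max (le_trans (ler_norm _) (H Ox)).
have hyM : (h y <= M')%R.
  case: (pselect (Omega y -> (`|h y| <= M)%R)) => [H|H]; last first.
    by exfalso; apply: Ny; right.
  by rewrite le_max (le_trans (ler_norm _) (H Oy)).
have hx0 := h0 x Ox.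
have hy0 := h0 y Oy.
move=> tau; rewrite le_eqVlt => /predU1P [tau0 | tpos] tS.
  rewrite -tau0.
  change (beta'%:E * LI R (CJ R (phi x)) 0 <= LI R (CJ R (phi y)) (0 + h x + h y))%E.
  have bp : (0%R <= beta'%:E)%E by rewrite lee_fin ltW // divr_gt0.
  apply: le_trans (lee_wpmul2l bp (@V_zero _ _ _ gx)) _.
  by rewrite mule0 LI_ge0.
change (beta'%:E * LI R (CJ R (phi x)) tau <= LI R (CJ R (phi y)) (tau + h x + h y))%E.
set s := (tau + h x + h y)%R.
have spos : (0 < s)%R by rewrite /s; lra.
have [ux ux0 Hux] := @LI_real _ _ _ gx _ tpos.
have [uy uy0 Huy] := @LI_real _ _ _ gy _ spos.
have wpos : (0 < s + h y + h x)%R by lra.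
have [w w0 Hw] := @LI_real _ _ _ gx _ wpos.
set t0 := (s / L)%R.
have t0pos : (0 < t0)%R by rewrite /t0 divr_gt0.
have t01 : (t0 <= 1)%R by rewrite /t0 ler_pdivrMr // mul1r /s /L; lra.
have t0s : (t0 <= s)%R.
  by rewrite /t0 ler_pdivrMr // ler_peMr // ltW.
have [v v0 Hv] := @LI_real _ _ _ gy _ t0pos.
have HNyx := HN y x Oy Ox nNy nNx t0 (ltW t0pos) t01.
have {}HNyx : (beta%:E * LI R (phi y) t0 <= LI R (phi x) (t0 + h y + h x))%E := HNyx.
have bvw : (beta * v <= w)%R.
  rewrite -lee_fin EFinM -Hv -Hw; apply: le_trans HNyx _.
  by apply: LI_mono; lra.
have scy := @LI_scale _ _ _ a1 gy _ _ _ _ t0pos t0s Hv Huy.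
have tw : (tau <= s + h y + h x)%R by rewrite /s; lra.
have scx := @LI_scale _ _ _ a1 gx _ _ _ _ tpos tw Hux Hw.
have Vx := @V_up _ _ _ gx _ _ tpos ux0 Hux.
have Vy := @V_low _ _ _ a1 gy _ _ spos uy0 Huy.
have bp : (0%R <= beta'%:E)%E by rewrite lee_fin ltW // divr_gt0.
apply: le_trans (lee_wpmul2l bp Vx) _.
rewrite -EFinM; apply: le_trans _ Vy; rewrite lee_fin.
have e1 : (uy <= a * L * v)%R.
  have -> : uy = ((L / s) * (t0 * uy))%R.
    by rewrite /t0; field; rewrite ?gt_eqF.
  apply: le_trans (ler_wpM2l _ scy) _; first by rewrite divr_ge0 ?ltW.
  by rewrite le_eqVlt; apply/orP; left; apply/eqP; field; rewrite ?gt_eqF.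
have e2 : (beta * tau * uy <= a * L * tau * w)%R.
  apply: le_trans (_ : beta * tau * (a * L * v) <= _)%R.
    by apply: ler_wpM2l => //; rewrite mulr_ge0 // ?ltW.
  have -> : (beta * tau * (a * L * v) = a * L * tau * (beta * v))%R by ring.
  by apply: ler_wpM2l => //; rewrite !mulr_ge0 // ?ltW.
have e3 : (a * L * tau * w <= a * L * (a * (s + h y + h x) * ux))%R.
  by rewrite -mulrA; apply: ler_wpM2l => //; rewrite mulr_ge0 // ?ltW.
have e4 : (a * (s + h y + h x) * ux <= a * (2 * s) * ux)%R.
  apply: ler_wpM2r; first exact: ltW.
  by apply: ler_wpM2l; [exact: ltW | rewrite /s; lra].
have K : (beta * tau * uy <= a * L * (a * (2 * s) * ux))%R.
  apply: le_trans e2 (le_trans e3 _).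
  by apply: ler_wpM2l => //; rewrite mulr_ge0 // ?ltW.
set Q := ((2 * a * a * a * L * ux * uy)^-1)%R.
have Q0 : (0 <= Q)%R by rewrite /Q invr_ge0 !mulr_ge0 // ?ltW.
have -> : (beta' * (2 * tau / ux) = beta * tau * uy * Q)%R.
  by rewrite /beta' /D /Q; field; rewrite ?gt_eqF.
have -> : (s / (a * uy) = a * L * (a * (2 * s) * ux) * Q)%R.
  by rewrite /Q; field; rewrite ?gt_eqF.
by apply: ler_wpM2r.
Qed.
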